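(* The class of $(\circ,\wedge,\mathsf{A})$-algebras that are completely representable by partial functions is a basic elementary class, i.e. it is the class of models of a single first-order sentence; moreover this sentence can be taken to be of universal-existential-universal form.
   Context: A $(\circ,\wedge,\mathsf{A})$-algebra is a set with two binary operations $\circ,\wedge$ and one unary operation $\mathsf{A}$. An algebra of partial functions of this signature is a set of partial functions, with base $X$ the union of all their domains and ranges, closed under: composition $f\circ g=\{(x,z)\mid \exists y\,(x,y)\in f,(y,z)\in g\}$ (apply $f$ first, then $g$); intersection; antidomain $\mathsf{A}(f)=\{(x,x)\mid x\in X, x\notin\mathrm{dom}(f)\}$. A representation by partial functions is an isomorphism onto such an algebra. The order is $a\le b\iff a\wedge b=a$. A representation $\theta$ is complete if for every $S$ with $\bigvee S$ existing, $\theta(\bigvee S)=\bigcup\theta[S]$ (equivalently, for every nonempty $S$ with $\bigwedge S$ existing, $\theta(\bigwedge S)=\bigcap\theta[S]$); an algebra is completely representable if it has a complete representation. It may be used that the class of $(\circ,\wedge,\mathsf{A})$-algebras representable by partial functions is a finitely axiomatisable variety (Jackson and Stokes). *)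

(* Defs.v *)
From Stdlib Require Import List Arith.
Import ListNotations.

Record CMAStruct := {
  carrier :> Type;
  op_comp : carrier -> carrier -> carrier;  (* f ∘ g : apply f first, then g *)
  op_meet : carrier -> carrier -> carrier;
  op_ant  : carrier -> carrier
}.

Definition leA (M : CMAStruct) (a b : M) : Prop := op_meet M a b = a.

Definition is_lub (M : CMAStruct) (S : M -> Prop) (j : M) : Prop :=
  (forall s, S s -> leA M s j) /\
  (forall u, (forall s, S s -> leA M s u) -> leA M j u).

Definition rel (X : Type) := X -> X -> Prop.
Definition functional {X} (f : rel X) : Prop :=
  forall x y z, f x y -> f x z -> y = z.
Definition rel_eq {X} (f g : rel X) : Prop := forall x y, f x y <-> g x y.
Definition rcomp {X} (f g : rel X) : rel X :=
  fun x z => exists y, f x y /\ g y z.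
Definition rmeet {X} (f g : rel X) : rel X := fun x y => f x y /\ g x y.
(** antidomain relative to the whole base X *)
Definition rant {X} (f : rel X) : rel X :=
  fun x y => x = y /\ ~ (exists z, f x z).

(** A representation by partial functions: an injective map into partial
    functions on X preserving the operations, where X is exactly the base,
    i.e. the union of all domains and ranges of the represented functions. *)
Definition representation (M : CMAStruct) (X : Type) (th : M -> rel X) : Prop :=
  (forall a, functional (th a)) /\
  (forall a b, rel_eq (th a) (th b) -> a = b) /\
  (forall a b, rel_eq (th (op_comp M a b)) (rcomp (th a) (th b))) /\
  (forall a b, rel_eq (th (op_meet M a b)) (rmeet (th a) (th b))) /\
  (forall a, rel_eq (th (op_ant M a)) (rant (th a))) /\
  (forall x : X, exists a y, th a x y \/ th a y x).

Definition complete_rep (M : CMAStruct) (X : Type) (th : M -> rel X) : Prop :=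
  forall (S : M -> Prop) (j : M), is_lub M S j ->
    rel_eq (th j) (fun x y => exists s, S s /\ th s x y).

Definition completely_representable (M : CMAStruct) : Prop :=
  exists (X : Type) (th : M -> rel X), representation M X th /\ complete_rep M X th.

Inductive term :=
  | tvar : nat -> term
  | tcomp : term -> term -> term
  | tmeet : term -> term -> term
  | tant : term -> term.

Inductive formula :=
  | fEq : term -> term -> formula
  | fFalse : formula
  | fNot : formula -> formula
  | fAnd : formula -> formula -> formula
  | fOr : formula -> formula -> formula
  | fImp : formula -> formula -> formula
  | fAll : nat -> formula -> formula
  | fEx : nat -> formula -> formula.

Fixpoint tvars (t : term) : list nat :=
  match t with
  | tvar n => [n]
  | tcomp t1 t2 | tmeet t1 t2 => tvars t1 ++ tvars t2
  | tant t1 => tvars t1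
  end.

Fixpoint fvars (p : formula) : list nat :=
  match p with
  | fEq t1 t2 => tvars t1 ++ tvars t2
  | fFalse => []
  | fNot q => fvars q
  | fAnd q r | fOr q r | fImp q r => fvars q ++ fvars r
  | fAll n q | fEx n q => filter (fun m => negb (Nat.eqb m n)) (fvars q)
  end.

Definition sentence (p : formula) : Prop := fvars p = [].

Fixpoint tval (M : CMAStruct) (e : nat -> M) (t : term) : M :=
  match t with
  | tvar n => e n
  | tcomp t1 t2 => op_comp M (tval M e t1) (tval M e t2)
  | tmeet t1 t2 => op_meet M (tval M e t1) (tval M e t2)
  | tant t1 => op_ant M (tval M e t1)
  end.

Definition upd (M : CMAStruct) (e : nat -> M) (n : nat) (v : M) : nat -> M :=
  fun m => if Nat.eqb m n then v else e m.

Fixpoint sat (M : CMAStruct) (e : nat -> M) (p : formula) : Prop :=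
  match p with
  | fEq t1 t2 => tval M e t1 = tval M e t2
  | fFalse => False
  | fNot q => ~ sat M e q
  | fAnd q r => sat M e q /\ sat M e r
  | fOr q r => sat M e q \/ sat M e r
  | fImp q r => sat M e q -> sat M e r
  | fAll n q => forall v : M, sat M (upd M e n v) q
  | fEx n q => exists v : M, sat M (upd M e n v) q
  end.

Definition models (M : CMAStruct) (p : formula) : Prop :=
  forall e : nat -> M, sat M e p.

Fixpoint quantifier_free (p : formula) : Prop :=
  match p with
  | fEq _ _ | fFalse => True
  | fNot q => quantifier_free q
  | fAnd q r | fOr q r | fImp q r => quantifier_free q /\ quantifier_free r
  | fAll _ _ | fEx _ _ => False
  end.

Fixpoint foralls (l : list nat) (p : formula) : formula :=
  match l with [] => p | n :: l' => fAll n (foralls l' p) end.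
Fixpoint existss (l : list nat) (p : formula) : formula :=
  match l with [] => p | n :: l' => fEx n (existss l' p) end.

Definition AEA_form (p : formula) : Prop :=
  exists (xs ys zs : list nat) (q : formula),
    quantifier_free q /\ p = foralls xs (existss ys (foralls zs q)).

(* Main.v *)
Require Import Defs.
From Stdlib Require Import List Arith Classical ProofIrrelevance.
Import ListNotations.

Definition V := tvar.
Definition cc := tcomp. Definition mm := tmeet.
Definition ZZ t := tcomp (tant t) t.
Definition DD t := tant (tant t).
Definition LE s u := fEq (tmeet s u) s.
Definition NE s u := fNot (fEq s u).

(* vars: c=0 y=1 j=2 | x=3 u=4 w'=5 | w=6 s=7 a=8 b=9 t=10 *)
Definition atomF := fOr (fEq (V 0) (ZZ (V 0)))
  (fAnd (NE (cc (V 3) (V 0)) (ZZ (V 0)))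
        (fImp (LE (V 6) (V 3)) (fOr (fEq (V 6) (ZZ (V 0))) (fEq (V 6) (V 3))))).
Definition rangeF := fOr (fOr (fEq (V 1) (ZZ (V 1)))
      (fAnd (LE (V 5) (V 1)) (fAnd (NE (V 5) (ZZ (V 1))) (NE (V 5) (V 1)))))
   (fAnd (fEq (cc (V 1) (V 4)) (ZZ (V 1)))
         (fImp (LE (V 7) (V 2)) (fImp (fEq (cc (V 1) (V 7)) (ZZ (V 1))) (LE (V 7) (V 4))))).
Definition a := V 8. Definition b := V 9. Definition t := V 10.
Definition lawsF := fAnd (fEq (cc (cc a b) t) (cc a (cc b t)))
 (fAnd (fEq (ZZ a) (ZZ b))
 (fAnd (fEq (cc (ZZ t) b) (ZZ t))
 (fAnd (fEq (cc a (ZZ t)) (ZZ t))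
 (fAnd (fImp (LE a b) (fEq a (cc (DD a) b)))
 (fAnd (LE (cc (DD a) b) b)
 (fAnd (LE (cc t (mm a b)) (cc t a))
 (fAnd (LE (cc t (mm a b)) (cc t b))
 (fAnd (fImp (fEq (cc t a) (cc t b)) (fEq (cc t (mm a b)) (cc t a)))
 (fAnd (LE (cc t (tant a)) t)
 (fAnd (fImp (fEq (cc t a) (ZZ a)) (fImp (fEq (cc t (tant a)) (ZZ a)) (fEq t (ZZ a))))
 (fAnd (fEq (cc a (tant (ZZ t))) a)
 (fAnd (fImp (fEq (cc (tant (mm a b)) a) (ZZ a)) (fEq (mm a b) a))
       (fImp (fEq (cc (tant (mm a b)) b) (ZZ a)) (fEq (mm a b) b)))))))))))))).
Definition phi := foralls [0;1;2] (existss [3;4;5] (foralls [6;7;8;9;10]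
   (fAnd atomF (fAnd rangeF lawsF)))).

Lemma phi_sentence : sentence phi.
Proof. reflexivity. Qed.
Lemma phi_AEA : AEA_form phi.
Proof. exists [0;1;2], [3;4;5], [6;7;8;9;10], (fAnd atomF (fAnd rangeF lawsF)).
  split; [cbv; tauto | reflexivity]. Qed.

Lemma thC {M X th} (R : representation M X th) a b x y : th (op_comp M a b) x y <-> exists z, th a x z /\ th b z y.
Proof. destruct R as (_&_&H&_). apply H. Qed.
Lemma thM {M X th} (R : representation M X th) a b x y : th (op_meet M a b) x y <-> th a x y /\ th b x y.
Proof. destruct R as (_&_&_&H&_). apply H. Qed.
Lemma thA {M X th} (R : representation M X th) a x y : th (op_ant M a) x y <-> x = y /\ ~ (exists z, th a x z).
Proof. destruct R as (_&_&_&_&H&_). apply H. Qed.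
Lemma thF {M X th} (R : representation M X th) a x y z : th a x y -> th a x z -> y = z.
Proof. destruct R as (H&_). apply H. Qed.
Lemma thI {M X th} (R : representation M X th) a b : (forall x y, th a x y <-> th b x y) -> a = b.
Proof. destruct R as (_&H&_). apply H. Qed.
Lemma thZ {M X th} (R : representation M X th) t x y : ~ th (op_comp M (op_ant M t) t) x y.
Proof. rewrite (thC R). intros (z&H1&H2). apply (thA R) in H1. destruct H1 as [<- H1]. eauto. Qed.
Lemma eqZ {M X th} (R : representation M X th) v t : v = op_comp M (op_ant M t) t <-> forall x y, ~ th v x y.
Proof. split. intros ->; apply (thZ R). intro H. apply (thI R). intros x y. split; intro H'.
  exfalso; eapply H; eauto. exfalso; eapply (thZ R); eauto. Qed.
Lemma leR {M X th} (R : representation M X th) a b : op_meet M a b = a <-> forall x y, th a x y -> th b x y.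
Proof. split. intros H x y Ha. rewrite <- H in Ha. apply (thM R) in Ha. tauto.
  intro H. apply (thI R). intros x y. rewrite (thM R). firstorder. Qed.
Lemma thD {M X th} (R : representation M X th) a x y : th (op_ant M (op_ant M a)) x y <-> x = y /\ exists z, th a x z.
Proof. rewrite (thA R). setoid_rewrite (thA R). split.
  intros [-> H]. split; auto. apply NNPP. intro H'. apply H. eauto.
  intros [-> [z Hz]]. split; auto. intros (u&->&H). eauto. Qed.

Definition Zr (M : CMAStruct) (x : M) := op_comp M (op_ant M x) x.

Record Laws (M : CMAStruct) : Prop := {
 L1 : forall a b t : M, op_comp M (op_comp M a b) t = op_comp M a (op_comp M b t);
 L2 : forall a b : M, Zr M a = Zr M b;
 L3 : forall t b : M, op_comp M (Zr M t) b = Zr M t;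
 L4 : forall a t : M, op_comp M a (Zr M t) = Zr M t;
 L5 : forall a b : M, op_meet M a b = a -> a = op_comp M (op_ant M (op_ant M a)) b;
 L6 : forall a b : M, op_meet M (op_comp M (op_ant M (op_ant M a)) b) b = op_comp M (op_ant M (op_ant M a)) b;
 L7 : forall t a b : M, op_meet M (op_comp M t (op_meet M a b)) (op_comp M t a) = op_comp M t (op_meet M a b);
 L8 : forall t a b : M, op_meet M (op_comp M t (op_meet M a b)) (op_comp M t b) = op_comp M t (op_meet M a b);
 L9 : forall t a b : M, op_comp M t a = op_comp M t b -> op_comp M t (op_meet M a b) = op_comp M t a;
 L10 : forall t a : M, op_meet M (op_comp M t (op_ant M a)) t = op_comp M t (op_ant M a);
 L11 : forall t a : M, op_comp M t a = Zr M a -> op_comp M t (op_ant M a) = Zr M a -> t = Zr M a;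
 L12 : forall a t : M, op_comp M a (op_ant M (Zr M t)) = a;
 L13 : forall a b : M, op_comp M (op_ant M (op_meet M a b)) a = Zr M a -> op_meet M a b = a;
 L14 : forall a b : M, op_comp M (op_ant M (op_meet M a b)) b = Zr M a -> op_meet M a b = b;
 LA : forall c : M, c <> Zr M c -> exists x, op_comp M x c <> Zr M c /\
        forall w, op_meet M w x = w -> w = Zr M c \/ w = x;
 LR : forall y j : M, (exists w, op_meet M w y = w /\ w <> Zr M y /\ w <> y) \/ y = Zr M y \/
        exists u, op_comp M y u = Zr M y /\ forall s, op_meet M s j = s -> op_comp M y s = Zr M y -> op_meet M s u = s
}.

Ltac rs R := repeat (setoid_rewrite (thC R) || setoid_rewrite (thM R) || setoid_rewrite (thA R)).

Lemma sound_eq {M X th} (R : representation M X th) :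
 (forall a b t : M, op_comp M (op_comp M a b) t = op_comp M a (op_comp M b t)) /\
 (forall a b : M, Zr M a = Zr M b) /\
 (forall t b : M, op_comp M (Zr M t) b = Zr M t) /\
 (forall a t : M, op_comp M a (Zr M t) = Zr M t) /\
 (forall a b : M, op_meet M a b = a -> a = op_comp M (op_ant M (op_ant M a)) b) /\
 (forall a b : M, op_meet M (op_comp M (op_ant M (op_ant M a)) b) b = op_comp M (op_ant M (op_ant M a)) b) /\
 (forall t a b : M, op_meet M (op_comp M t (op_meet M a b)) (op_comp M t a) = op_comp M t (op_meet M a b)) /\
 (forall t a b : M, op_meet M (op_comp M t (op_meet M a b)) (op_comp M t b) = op_comp M t (op_meet M a b)) /\
 (forall t a b : M, op_comp M t a = op_comp M t b -> op_comp M t (op_meet M a b) = op_comp M t a) /\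
 (forall t a : M, op_meet M (op_comp M t (op_ant M a)) t = op_comp M t (op_ant M a)) /\
 (forall t a : M, op_comp M t a = Zr M a -> op_comp M t (op_ant M a) = Zr M a -> t = Zr M a) /\
 (forall a t : M, op_comp M a (op_ant M (Zr M t)) = a) /\
 (forall a b : M, op_comp M (op_ant M (op_meet M a b)) a = Zr M a -> op_meet M a b = a) /\
 (forall a b : M, op_comp M (op_ant M (op_meet M a b)) b = Zr M a -> op_meet M a b = b).
Proof.
  unfold Zr. repeat split.
  - intros. apply (thI R); intros. rs R. firstorder.
  - intros. apply (eqZ R). apply (thZ R).
  - intros. apply (eqZ R). intros x y. rewrite (thC R). intros (z&H&_). eapply (thZ R); eauto.
  - intros. apply (eqZ R). intros x y. rewrite (thC R). intros (z&_&H). eapply (thZ R); eauto.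
  - intros a b H. rewrite (leR R) in H. apply (thI R); intros x y. rewrite (thC R). setoid_rewrite (thD R).
    split. intro Hy. exists x. split; [split; eauto|]. apply H; auto. intros (z&(<-&(z'&Hz'))&Hb). rewrite (thF R b x y z'); auto.
  - intros a b. apply (leR R). intros x y. rewrite (thC R). setoid_rewrite (thD R). intros (z&(<-&_)&H); auto.
  - intros t a b. apply (leR R). intros x y. rs R. firstorder.
  - intros t a b. apply (leR R). intros x y. rs R. firstorder.
  - intros t a b H. apply (thI R). intros x y. rs R. split. firstorder.
    intros (z&Ht&Ha). exists z. split; auto. split; auto.
    assert (Hb : th (op_comp M t b) x y). { rewrite <- H. apply (thC R); eauto. }
    apply (thC R) in Hb. destruct Hb as (z'&Ht'&Hb). rewrite (thF R t x z z'); auto.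
  - intros t a. apply (leR R). intros x y. rs R. intros (z&Ht&<-&_). auto.
  - intros t a H1 H2. rewrite (eqZ R) in *. intros x y Ht.
    destruct (classic (exists u, th a y u)) as [[u Hu]|Hn].
    + apply (H1 x u). apply (thC R); eauto.
    + apply (H2 x y). apply (thC R). exists y. split; auto. apply (thA R). auto.
  - intros a t. apply (thI R); intros x y. rewrite (thC R). setoid_rewrite (thA R). split.
    intros (z&H&<-&_). auto. intro H. exists y. split; auto. split; auto. intros (u&Hu). eapply (thZ R); eauto.
  - intros a b H. rewrite (eqZ R) in H. apply (leR R). intros x y Ha.
    destruct (classic (exists u, th (op_meet M a b) x u)) as [[u Hu]|Hn].
    + pose proof Hu as Hu'. apply (thM R) in Hu'. rewrite (thF R a x y u); tauto.
    + exfalso. apply (H x y). apply (thC R). exists x. split; auto. apply (thA R). auto.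
  - intros a b H. rewrite (eqZ R) in H. apply (thI R). intros x y. split. intro Hm; apply (thM R) in Hm; tauto. intro Hb.
    destruct (classic (exists u, th (op_meet M a b) x u)) as [[u Hu]|Hn].
    + pose proof Hu as Hu'. apply (thM R) in Hu'. rewrite (thF R b x y u); tauto.
    + exfalso. apply (H x y). apply (thC R). exists x. split; auto. apply (thA R). auto.
Qed.

Lemma atom_pt {M X th} (R : representation M X th) (Cp : complete_rep M X th) c p q :
  th c p q -> exists e, th e p p /\ (forall x y, th e x y -> x = y /\ exists z, th c x z) /\
    (forall w, op_meet M w e = w -> (forall x y, ~ th w x y) \/ w = e).
Proof.
  intro Hc. apply NNPP. intro Hn.
  assert (H : forall e, th e p p -> (forall x y, th e x y -> x = y /\ exists z, th c x z) ->
     exists w, op_meet M w e = w /\ (exists x y, th w x y) /\ w <> e).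
  { intros e H1 H2. apply NNPP. intro H3. apply Hn. exists e. split; auto. split; auto.
    intros w Hw. apply NNPP. intro H4. apply H3. exists w. split; auto. split.
    apply NNPP. intro H5. apply H4. left. intros x y Hxy. apply H5. eauto.
    intro; apply H4; auto. }
  clear Hn.
  set (d := op_ant M (op_ant M c)).
  set (S := fun s => op_meet M s d = s /\ ~ exists y, th s p y).
  assert (Hd : forall x y, th d x y <-> x = y /\ exists z, th c x z) by (intros; apply (thD R)).
  assert (Hlub : is_lub M S d).
  { split. intros s Hs. apply Hs.
    intros u Hu. unfold leA in *.
    set (r := op_comp M (op_ant M (op_meet M u d)) d).
    assert (Hr : forall x y, th r x y <-> x = y /\ ~ (exists z, th (op_meet M u d) x z) /\ exists z, th c x z).
    { intros x y. unfold r. rewrite (thC R). setoid_rewrite (thA R). setoid_rewrite Hd. split.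
      intros (z&(<-&H1)&<-&H2). auto. intros (<-&H1&H2). exists x. auto. }
    assert (Hrd : op_meet M r d = r).
    { apply (leR R). intros x y Hxy. apply Hr in Hxy. apply Hd. tauto. }
    assert (Hw0 : forall w, op_meet M w r = w -> S w -> forall x y, ~ th w x y).
    { intros w Hwr Sw x y Hw. assert (Hwu : op_meet M w u = w) by (apply Hu; auto).
      rewrite (leR R) in Hwr, Hwu. pose proof (Hwr _ _ Hw) as H1. apply Hr in H1. destruct H1 as (<-&H1&H2).
      apply H1. exists x. apply (thM R). split; auto. apply Hd. auto. }
    assert (Hrp : ~ exists y, th r p y).
    { intros (y&Hy). assert (y = p) by (apply Hr in Hy; symmetry; tauto). subst y.
      destruct (H r Hy) as (w&Hwr&(x0&y0&Hw0')&Hne).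
      { intros x y Hxy. apply Hr in Hxy. tauto. }
      destruct (classic (exists y', th w p y')) as [Hwp|Hwp].
      - set (w2 := op_comp M (op_ant M w) r).
        assert (Hw2 : forall x y, th w2 x y <-> (~ exists z, th w x z) /\ th r x y).
        { intros x y. unfold w2. rewrite (thC R). setoid_rewrite (thA R). split.
          intros (z&(<-&H1)&H2). auto. intros [H1 H2]. exists x. auto. }
        assert (Hw2r : op_meet M w2 r = w2) by (apply (leR R); intros x y Hxy; apply Hw2 in Hxy; tauto).
        assert (Sw2 : S w2).
        { split. apply (leR R). intros x y Hxy. apply Hw2 in Hxy. destruct Hxy as [_ Hxy]. apply Hr in Hxy. apply Hd. tauto.
          intros (y1&Hy1). apply Hw2 in Hy1. tauto. }
        apply Hne. apply (thI R). intros x y. split. intro Hxy. rewrite (leR R) in Hwr. auto.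
        intro Hxy. destruct (classic (exists z, th w x z)) as [[z Hz]|Hz].
        + rewrite (leR R) in Hwr. rewrite (thF R r x y z); auto.
        + exfalso. eapply (Hw0 w2 Hw2r Sw2 x y). apply Hw2. auto.
      - assert (Sw : S w).
        { split; auto. apply (leR R). intros x y Hxy. rewrite (leR R) in Hwr, Hrd. auto. }
        eapply (Hw0 w Hwr Sw x0 y0); eauto. }
    assert (Sr : S r) by (split; auto).
    pose proof (Hu r Sr) as Hru. rewrite (leR R) in Hru.
    apply (leR R). intros x y Hxy. pose proof Hxy as Hxy'. apply Hd in Hxy'. destruct Hxy' as (<-&Hx).
    destruct (classic (exists z, th (op_meet M u d) x z)) as [[z Hz]|Hz].
    + apply (thM R) in Hz. destruct Hz as [Hz1 Hz2]. apply Hd in Hz2. destruct Hz2 as (<-&_). auto.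
    + apply Hru. apply Hr. auto. }
  pose proof (Cp S d Hlub p p) as Hcp. destruct Hcp as [Hcp _].
  destruct Hcp as (s&(_&Hs)&Hsp). apply Hd. eauto. apply Hs. eauto.
Qed.

Lemma nonempty_of {M X th} (R : representation M X th) c t : c <> Zr M t -> exists p q, th c p q.
Proof. intro H. apply NNPP. intro H'. apply H. apply (eqZ R). intros x y Hxy. apply H'. eauto. Qed.

Lemma sound_LA {M X th} (R : representation M X th) (Cp : complete_rep M X th) (c : M) :
  c <> Zr M c -> exists x, op_comp M x c <> Zr M c /\
        forall w, op_meet M w x = w -> w = Zr M c \/ w = x.
Proof.
  intro H. destruct (nonempty_of R _ _ H) as (p&q&Hpq).
  destruct (atom_pt R Cp c p q Hpq) as (e&He&He1&He2). exists e. split.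
  - intro Hz. unfold Zr in Hz. rewrite (eqZ R) in Hz. apply (Hz p q). apply (thC R); eauto.
  - intros w Hw. destruct (He2 w Hw) as [H1|H1]; auto. left. apply (eqZ R). auto.
Qed.

Lemma sound_LR {M X th} (R : representation M X th) (Cp : complete_rep M X th) (y j : M) :
  (exists w, op_meet M w y = w /\ w <> Zr M y /\ w <> y) \/ y = Zr M y \/
  exists u, op_comp M y u = Zr M y /\ forall s, op_meet M s j = s -> op_comp M y s = Zr M y -> op_meet M s u = s.
Proof.
  destruct (classic (exists w, op_meet M w y = w /\ w <> Zr M y /\ w <> y)) as [H|H]; [left; auto|right].
  destruct (classic (y = Zr M y)) as [H0|H0]; [left; auto|right].
  assert (Hat : forall w, op_meet M w y = w -> w = Zr M y \/ w = y).
  { intros w Hw. apply NNPP. intro H1. apply H. exists w. split; [auto|]. split; intro; apply H1; auto. }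
  destruct (nonempty_of R _ _ H0) as (p&q&Hpq).
  assert (Hq : th (op_ant M (Zr M y)) q q). { apply (thA R). split; auto. intros (z&Hz). eapply (thZ R); eauto. }
  destruct (atom_pt R Cp _ q q Hq) as (f&Hf&Hf1&Hf2).
  assert (Hrange : forall p' q', th y p' q' -> exists z, th f q' z).
  { set (g := op_comp M y (op_ant M f)).
    assert (Hg : op_meet M g y = g).
    { apply (leR R). intros x z Hxz. unfold g in Hxz. apply (thC R) in Hxz. destruct Hxz as (v&Hv&Hv2).
      apply (thA R) in Hv2. destruct Hv2 as [<- _]. auto. }
    destruct (Hat g Hg) as [Hg0|Hg0].
    - intros p' q' H1. apply NNPP. intro H2. unfold Zr in Hg0. rewrite (eqZ R) in Hg0. apply (Hg0 p' q').
      apply (thC R). exists q'. split; auto. apply (thA R). auto.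
    - exfalso. assert (th g p q) by (rewrite Hg0; auto). unfold g in H1. apply (thC R) in H1.
      destruct H1 as (v&Hv&Hv2). rewrite (thF R y p v q) in Hv2; auto. apply (thA R) in Hv2. destruct Hv2 as [_ Hv2]. eauto. }
  exists (op_comp M (op_ant M f) j). split.
  - unfold Zr. apply (eqZ R). intros x z Hxz. apply (thC R) in Hxz. destruct Hxz as (v&Hv&Hv2).
    apply (thC R) in Hv2. destruct Hv2 as (v'&Hv'&_). apply (thA R) in Hv'. destruct Hv' as [<- Hv'].
    apply Hv'. eapply Hrange; eauto.
  - intros s Hsj Hys. rewrite (leR R) in Hsj. apply (leR R). intros a b Hab. apply (thC R). exists a.
    split; [|auto]. apply (thA R). split; auto. intros (z&Hz).
    assert (z = a) by (symmetry; apply (Hf1 _ _ Hz)). subst z.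
    set (g2 := op_comp M (op_ant M (op_ant M s)) f).
    assert (Hg2 : forall x z, th g2 x z <-> (x = z /\ exists v, th s x v) /\ th f x z).
    { intros x z. unfold g2. rewrite (thC R). setoid_rewrite (thD R).
      split; [intros (v&(<-&K1)&K2); split; auto; split; auto; apply (Hf1 _ _ K2) | intros [[<- K1] K2]; exists x; auto]. }
    assert (Hg2f : op_meet M g2 f = g2) by (apply (leR R); intros x z Hxz; apply Hg2 in Hxz; tauto).
    destruct (Hf2 g2 Hg2f) as [Hg|Hg].
    + apply (Hg a a). apply Hg2. eauto.
    + assert (Hq2 : th g2 q q) by (rewrite Hg; auto). apply Hg2 in Hq2. destruct Hq2 as [[_ (v&Hv)] _].
      unfold Zr in Hys. rewrite (eqZ R) in Hys. apply (Hys p v). apply (thC R). eauto.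
Qed.

Lemma sound_laws M : completely_representable M -> Laws M.
Proof.
  intros (X&th&R&Cp). destruct (sound_eq R) as (H1&H2&H3&H4&H5&H6&H7&H8&H9&H10&H11&H12&H13&H14).
  constructor; auto. apply (sound_LA R Cp). apply (sound_LR R Cp).
Qed.

Definition atomz (M : CMAStruct) (z x : M) := x <> z /\ forall w, op_meet M w x = w -> w = z \/ w = x.
Definition Xz (M : CMAStruct) (z : M) := {x : M | atomz M z x}.
Definition thz (M : CMAStruct) (z : M) (a : M) : rel (Xz M z) :=
  fun x y => op_comp M (proj1_sig x) a = proj1_sig y.


Lemma cA0 M (L : Laws M) z (Hz : forall t, Zr M t = z) w : op_meet M w z = w -> w = z.
Proof. intro H. rewrite (L5 M L _ _ H). rewrite <- (Hz z). rewrite (L4 M L). auto. Qed.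

Lemma cA1 M (L : Laws M) z (Hz : forall t, Zr M t = z) x a :
  atomz M z x -> op_comp M x a <> z -> atomz M z (op_comp M x a).
Proof.
  intros [Hx Hxa] Hne. split; auto. intros w Hw.
  rewrite (L5 M L _ _ Hw). rewrite <- (L1 M L).
  destruct (Hxa _ (L6 M L w x)) as [H|H]; rewrite H.
  - left. rewrite <- (Hz z). rewrite (L3 M L). auto.
  - right. auto.
Qed.

Lemma cA2 M (L : Laws M) x s j : op_meet M s j = s -> op_meet M (op_comp M x s) (op_comp M x j) = op_comp M x s.
Proof. intro H. pose proof (L8 M L x s j) as H8. rewrite H in H8. auto. Qed.

Lemma cA3 M z y w : atomz M z y -> op_meet M w y = w -> w <> z -> w = y.
Proof. intros [_ H] H1 H2. destruct (H w H1); tauto. Qed.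

Lemma sig_ext M z (x y : Xz M z) : proj1_sig x = proj1_sig y -> x = y.
Proof. destruct x, y; simpl. intros ->. f_equal. apply proof_irrelevance. Qed.

Lemma cons_rep M (L : Laws M) z (Hz : forall t, Zr M t = z) : representation M (Xz M z) (thz M z).
Proof.
  unfold representation, thz, functional, rel_eq, rcomp, rmeet, rant. split; [|split; [|split; [|split; [|split]]]].
  - intros a x y y' H1 H2. apply sig_ext. congruence.
  - intros a b Hab.
    assert (Hx : forall x : Xz M z, op_comp M (proj1_sig x) a = op_comp M (proj1_sig x) b).
    { intros [x Ax]; simpl.
      destruct (classic (op_comp M x a = z)) as [Ha|Ha]; destruct (classic (op_comp M x b = z)) as [Hb|Hb].
      - congruence.
      - pose proof (cA1 M L z Hz x b Ax Hb) as Ab.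
        specialize (proj2 (Hab (exist _ x Ax) (exist _ _ Ab)) eq_refl). simpl. auto.
      - pose proof (cA1 M L z Hz x a Ax Ha) as Aa.
        specialize (proj1 (Hab (exist _ x Ax) (exist _ _ Aa)) eq_refl). simpl. auto.
      - pose proof (cA1 M L z Hz x a Ax Ha) as Aa.
        specialize (proj1 (Hab (exist _ x Ax) (exist _ _ Aa)) eq_refl). simpl. auto. }
    assert (key : forall a b, (forall x : Xz M z, op_comp M (proj1_sig x) a = op_comp M (proj1_sig x) b) ->
        op_comp M (op_ant M (op_meet M a b)) a = z \/
        op_comp M (op_ant M (op_meet M a b)) b = z).
    { intros a0 b0 Hx0. apply NNPP. intro Hn. apply not_or_and in Hn. destruct Hn as [Hn1 _].
      set (c := op_comp M (op_ant M (op_meet M a0 b0)) a0) in *.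
      assert (Hc : c <> Zr M c) by (rewrite Hz; auto).
      destruct (LA M L c Hc) as (x&Hxc&Hat). rewrite Hz in Hxc. 
      assert (Ax : atomz M z x).
      { split. intros ->. apply Hxc. rewrite <- (Hz z). apply (L3 M L).
        intros w Hw. rewrite <- (Hz c). auto. }
      assert (H1 : op_comp M x (op_ant M (op_meet M a0 b0)) = x).
      { apply (cA3 M z x); auto. apply (L10 M L). intro H0. apply Hxc. unfold c. rewrite <- (L1 M L). rewrite H0.
        rewrite <- (Hz a0). apply (L3 M L). }
      assert (H2 : op_comp M x (op_meet M a0 b0) = z).
      { rewrite <- H1. rewrite (L1 M L). fold (Zr M (op_meet M a0 b0)). rewrite (L4 M L). auto. }
      assert (H3 : op_comp M x a0 <> z).
      { rewrite <- H1. rewrite (L1 M L). auto. }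
      specialize (Hx0 (exist _ x Ax)). simpl in Hx0.
      apply H3. rewrite <- (L9 M L _ _ _ Hx0). auto. }
    assert (Hab1 : op_meet M a b = a).
    { destruct (key a b Hx) as [H|H].
      - apply (L13 M L). rewrite Hz. auto.
      - apply NNPP. intro Hn.
        set (c := op_comp M (op_ant M (op_meet M a b)) a).
        assert (Hc : c <> Zr M c).
        { rewrite Hz. intro H0. apply Hn. apply (L13 M L). rewrite Hz. auto. }
        destruct (LA M L c Hc) as (x&Hxc&Hat). rewrite Hz in Hxc.
        assert (Ax : atomz M z x).
        { split. intros ->. apply Hxc. rewrite <- (Hz z). apply (L3 M L).
          intros w Hw. rewrite <- (Hz c). auto. }
        assert (H1 : op_comp M x (op_ant M (op_meet M a b)) = x).
        { apply (cA3 M z x); auto. apply (L10 M L). intro H0. apply Hxc. unfold c. rewrite <- (L1 M L). rewrite H0.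
          rewrite <- (Hz a). apply (L3 M L). }
        assert (H2 : op_comp M x (op_meet M a b) = z).
        { rewrite <- H1. rewrite (L1 M L). fold (Zr M (op_meet M a b)). rewrite (L4 M L). auto. }
        assert (H3 : op_comp M x a <> z).
        { rewrite <- H1. rewrite (L1 M L). auto. }
        specialize (Hx (exist _ x Ax)). simpl in Hx.
        apply H3. rewrite <- (L9 M L _ _ _ Hx). auto. }
    assert (Hab2 : op_meet M a b = b).
    { apply NNPP. intro Hn.
      set (c := op_comp M (op_ant M (op_meet M a b)) b).
      assert (Hc : c <> Zr M c).
      { rewrite Hz. intro H0. apply Hn. apply (L14 M L). rewrite Hz. auto. }
      destruct (LA M L c Hc) as (x&Hxc&Hat). rewrite Hz in Hxc.
      assert (Ax : atomz M z x).
      { split. intros ->. apply Hxc. rewrite <- (Hz z). apply (L3 M L).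
        intros w Hw. rewrite <- (Hz c). auto. }
      assert (H1 : op_comp M x (op_ant M (op_meet M a b)) = x).
      { apply (cA3 M z x); auto. apply (L10 M L). intro H0. apply Hxc. unfold c. rewrite <- (L1 M L). rewrite H0.
        rewrite <- (Hz b). apply (L3 M L). }
      assert (H2 : op_comp M x (op_meet M a b) = z).
      { rewrite <- H1. rewrite (L1 M L). fold (Zr M (op_meet M a b)). rewrite (L4 M L). auto. }
      assert (H3 : op_comp M x b <> z).
      { rewrite <- H1. rewrite (L1 M L). auto. }
      specialize (Hx (exist _ x Ax)). simpl in Hx.
      apply H3. rewrite <- Hx. rewrite <- (L9 M L _ _ _ Hx). auto. }
    congruence.
  - intros a b [x Ax] [y Ay]; simpl. split.
    + intro H. assert (Hne : op_comp M x a <> z).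
      { intro H0. apply (proj1 Ay). rewrite <- H, <- (L1 M L), H0, <- (Hz z). apply (L3 M L). }
      exists (exist _ _ (cA1 M L z Hz x a Ax Hne)). simpl. split; auto. rewrite (L1 M L). auto.
    + intros ([w Aw]&H1&H2). simpl in *. rewrite <- (L1 M L). congruence.
  - intros a b [x Ax] [y Ay]; simpl. split.
    + intro H. assert (Hy1 : op_meet M y (op_comp M x a) = y) by (rewrite <- H; apply (L7 M L)).
      assert (Hy2 : op_meet M y (op_comp M x b) = y) by (rewrite <- H; apply (L8 M L)).
      assert (Ha : op_comp M x a <> z).
      { intro H0. rewrite H0 in Hy1. apply (proj1 Ay). apply (cA0 M L z Hz). auto. }
      assert (Hb : op_comp M x b <> z).
      { intro H0. rewrite H0 in Hy2. apply (proj1 Ay). apply (cA0 M L z Hz). auto. }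
      split; symmetry; apply (cA3 M z); auto; try apply (cA1 M L z Hz); auto; apply (proj1 Ay).
    + intros [H1 H2]. rewrite (L9 M L); congruence.
  - intros a [x Ax] [y Ay]; simpl. split.
    + intro H. assert (Hyx : y = x).
      { apply (cA3 M z x); auto. rewrite <- H. apply (L10 M L). apply (proj1 Ay). }
      split. apply sig_ext; simpl; auto. rewrite Hyx in H.
      intros ([w Aw]&Hw). simpl in Hw. apply (proj1 Aw). rewrite <- Hw, <- H, (L1 M L).
      fold (Zr M a). rewrite (L4 M L). auto.
    + intros [He Hn]. assert (x = y) by (apply (f_equal (@proj1_sig _ _)) in He; auto). subst y.
      assert (Hxa : op_comp M x a = z).
      { apply NNPP. intro H0. apply Hn. exists (exist _ _ (cA1 M L z Hz x a Ax H0)). reflexivity. }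
      destruct (proj2 Ax _ (L10 M L x a)) as [H|H]; auto.
      exfalso. apply (proj1 Ax). rewrite <- (Hz a). apply (L11 M L); rewrite Hz; auto.
  - intros [x Ax]. exists (op_ant M z), (exist _ x Ax). left. simpl. rewrite <- (Hz z). apply (L12 M L).
Qed.

Lemma cons_complete M (L : Laws M) z (Hz : forall t, Zr M t = z) : complete_rep M (Xz M z) (thz M z).
Proof.
  unfold complete_rep, is_lub, leA, rel_eq, thz. intros S j [Hub Hlst] [x Ax] [y Ay]; simpl. split.
  - intro H. apply NNPP. intro Hn.
    destruct (LR M L x j) as [(w&Hw&Hw1&Hw2)|[H0|(u&Hu1&Hu2)]].
    + rewrite Hz in Hw1. destruct (proj2 Ax w Hw); contradiction.
    + apply (proj1 Ax). rewrite H0; apply Hz.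
    + rewrite Hz in Hu1, Hu2.
      assert (Hup : forall s, S s -> op_meet M s u = s).
      { intros s Hs. apply Hu2. apply Hub; auto.
        pose proof (cA2 M L x s j (Hub s Hs)) as H2. rewrite H in H2.
        destruct (proj2 Ay _ H2) as [H3|H3]; auto. exfalso. apply Hn. exists s. split; auto. }
      pose proof (cA2 M L x j u (Hlst u Hup)) as H2. rewrite H, Hu1 in H2.
      apply (proj1 Ay). apply (cA0 M L z Hz). auto.
  - intros (s&Hs&Hxs). pose proof (cA2 M L x s j (Hub s Hs)) as H2. rewrite Hxs in H2.
    assert (Hne : op_comp M x j <> z).
    { intro H0. rewrite H0 in H2. apply (proj1 Ay). apply (cA0 M L z Hz). auto. }
    symmetry. apply (cA3 M z); auto. apply (cA1 M L z Hz); auto. apply (proj1 Ay).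
Qed.

Ltac takek Q k := match k with
  | O => first [exact (proj1 Q) | exact Q]
  | S ?k' => takek (proj2 Q) k' end.

Theorem mainTheorem17 :
  exists phi : formula,
    sentence phi /\ AEA_form phi /\
    forall M : CMAStruct, inhabited M ->
      (models M phi <-> completely_representable M).
Proof.
  exists phi. split; [apply phi_sentence|split; [apply phi_AEA|]].
  intros M [m0]. split.
  - intro Hm. specialize (Hm (fun _ => m0)). cbn -[op_comp op_meet op_ant] in Hm.
    assert (L : Laws M).
    { constructor.
      - intros a b t. destruct (Hm m0 m0 m0) as (x&u&w'&H). specialize (H m0 m0 a b t). takek (proj2 (proj2 H)) 0.
      - intros a b. destruct (Hm m0 m0 m0) as (x&u&w'&H). specialize (H m0 m0 a b m0). takek (proj2 (proj2 H)) 1.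
      - intros t b. destruct (Hm m0 m0 m0) as (x&u&w'&H). specialize (H m0 m0 m0 b t). takek (proj2 (proj2 H)) 2.
      - intros a t. destruct (Hm m0 m0 m0) as (x&u&w'&H). specialize (H m0 m0 a m0 t). takek (proj2 (proj2 H)) 3.
      - intros a b. destruct (Hm m0 m0 m0) as (x&u&w'&H). specialize (H m0 m0 a b m0). takek (proj2 (proj2 H)) 4.
      - intros a b. destruct (Hm m0 m0 m0) as (x&u&w'&H). specialize (H m0 m0 a b m0). takek (proj2 (proj2 H)) 5.
      - intros t a b. destruct (Hm m0 m0 m0) as (x&u&w'&H). specialize (H m0 m0 a b t). takek (proj2 (proj2 H)) 6.
      - intros t a b. destruct (Hm m0 m0 m0) as (x&u&w'&H). specialize (H m0 m0 a b t). takek (proj2 (proj2 H)) 7.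
      - intros t a b. destruct (Hm m0 m0 m0) as (x&u&w'&H). specialize (H m0 m0 a b t). takek (proj2 (proj2 H)) 8.
      - intros t a. destruct (Hm m0 m0 m0) as (x&u&w'&H). specialize (H m0 m0 a m0 t). takek (proj2 (proj2 H)) 9.
      - intros t a. destruct (Hm m0 m0 m0) as (x&u&w'&H). specialize (H m0 m0 a m0 t). takek (proj2 (proj2 H)) 10.
      - intros a t. destruct (Hm m0 m0 m0) as (x&u&w'&H). specialize (H m0 m0 a m0 t). takek (proj2 (proj2 H)) 11.
      - intros a b. destruct (Hm m0 m0 m0) as (x&u&w'&H). specialize (H m0 m0 a b m0). takek (proj2 (proj2 H)) 12.
      - intros a b. destruct (Hm m0 m0 m0) as (x&u&w'&H). specialize (H m0 m0 a b m0). takek (proj2 (proj2 H)) 13.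
      - intros c Hc. destruct (Hm c m0 m0) as (x&u&w'&H). exists x.
        destruct (H m0 m0 m0 m0 m0) as [[H1|[H1 _]] _]; [contradiction|]. split; auto.
        intros w Hw. destruct (H w m0 m0 m0 m0) as [[H2|[_ H2]] _]; [contradiction|]. auto.
      - intros y j. destruct (Hm m0 y j) as (x&u&w'&H).
        destruct (classic (y = Zr M y \/ (op_meet M w' y = w' /\ w' <> Zr M y /\ w' <> y))) as [[H1|H1]|H1].
        + right; left; auto.
        + left. exists w'. exact H1.
        + right; right. exists u.
          destruct (H m0 m0 m0 m0 m0) as [_ [[H2|[H2 _]] _]]; [contradiction|]. split; auto.
          intros s Hs Hys. destruct (H m0 s m0 m0 m0) as [_ [[H3|[_ H3]] _]]; [contradiction|]. auto. }
    pose (z := Zr M m0). assert (Hz : forall t, Zr M t = z) by (intro; apply (L2 M L)).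
    exists (Xz M z), (thz M z). split; [apply cons_rep|apply cons_complete]; auto.
  - intro Hc. pose proof (sound_laws M Hc) as L. intro e. cbn -[op_comp op_meet op_ant]. intros c y j.
    assert (Px : exists x, forall w, c = Zr M c \/ (op_comp M x c <> Zr M c /\
                (op_meet M w x = w -> w = Zr M c \/ w = x))).
    { destruct (classic (c = Zr M c)) as [Hc0|Hc0]. exists c; auto.
      destruct (LA M L c Hc0) as (x&Hx1&Hx2). exists x. intro w. right. auto. }
    assert (Pr : exists u w', forall s, (y = Zr M y \/ (op_meet M w' y = w' /\ w' <> Zr M y /\ w' <> y)) \/
         (op_comp M y u = Zr M y /\ (op_meet M s j = s -> op_comp M y s = Zr M y -> op_meet M s u = s))).
    { destruct (LR M L y j) as [(w'&H1)|[H1|(u&Hu1&Hu2)]].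
      - exists y, w'. auto.
      - exists y, y. auto.
      - exists u, y. intro s. right. auto. }
    destruct Px as (x&Px). destruct Pr as (u&w'&Pr). exists x, u, w'. intros w s a b t.
    split; [apply Px|split; [apply Pr|]].
    repeat match goal with |- _ /\ _ => split end;
    first [apply (L1 M L) | apply (L2 M L) | apply (L3 M L) | apply (L4 M L) | apply (L5 M L) | apply (L6 M L)
      | apply (L7 M L) | apply (L8 M L) | apply (L9 M L) | apply (L10 M L) | apply (L11 M L) | apply (L12 M L)
      | apply (L13 M L) | apply (L14 M L)].
Qed.
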